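(* Let $P$ be a finite poset with $n$ elements and $\theta:P\to[n]$ a bijection. Then $$\hat K_{P,\theta}=\sum_{N\ge n}\ \sum_{w\in\tilde{\mathcal J}_N(P,\theta)}\hat L_{\mathcal C(w)}.$$
   Context: A $(P,\theta)$-multiset-valued partition is a map $\sigma$ from $P$ to nonempty finite multisets of positive integers such that for every covering relation $s\lessdot t$ in $P$: $\max\sigma(s)\le\min\sigma(t)$ if $\theta(s)<\theta(t)$, and $\max\sigma(s)<\min\sigma(t)$ if $\theta(s)>\theta(t)$. $\hat K_{P,\theta}=\sum_\sigma\prod_{r\ge1}x_r^{m_r(\sigma)}$, summed over all such $\sigma$, where $m_r(\sigma)$ is the total multiplicity of $r$ in all the multisets $\sigma(p)$, $p\in P$. A linear multi-extension of $P$ by $[N]$ ($N\ge n$) is a map $e$ from $P$ to nonempty subsets of $[N]$ such that $\max e(x)<\min e(y)$ whenever $x<y$ in $P$, each $i\in[N]$ lies in $e(x)$ for exactly one $x\in P$ (denoted $e^{-1}(i)$), and no $e(x)$ contains both $i$ and $i+1$. $\tilde{\mathcal J}_N(P,\theta)$ is the set of words $\theta(e^{-1}(1))\theta(e^{-1}(2))\cdots\theta(e^{-1}(N))$ over all linear multi-extensions $e$ of $P$ by $[N]$. For a word $w=w_1\cdots w_N$ with no two consecutive letters equal, $\mathcal C(w)=(s_1,s_2-s_1,\dots,N-s_k)$ where $\{s_1<\dots<s_k\}=\{i:w_i>w_{i+1}\}$. For a composition $\alpha=(\alpha_1,\dots,\alpha_k)$ of $m$ with $S_\alpha=\{\alpha_1,\alpha_1+\alpha_2,\dots,\alpha_1+\dots+\alpha_{k-1}\}$,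 $\hat L_\alpha=\sum x^\sigma$ over all sequences $(\sigma_1,\dots,\sigma_m)$ of nonempty finite multisets of positive integers with $\max\sigma_j\le\min\sigma_{j+1}$ for all $j$ and strict inequality when $j\in S_\alpha$, with $x^\sigma$ the monomial counting multiplicities. *)

(* Defs.v *)
From mathcomp Require Import all_boot all_order.
Set Implicit Arguments. Unset Strict Implicit. Unset Printing Implicit Defensive.
Import Order.Theory.
Local Open Scope order_scope.

Definition card_eq (T : eqType) (A : T -> Prop) (c : nat) : Prop :=
  exists f : 'I_c -> T, injective f /\ (forall x, A x <-> exists i, f i = x).

(* A finite multiset of positive integers is represented canonically by the
   nondecreasing list of its elements.  min = head, max = last,
   multiplicity of r = count_mem r. *)
Definition posmset (s : seq nat) : bool := sorted leq s && all (leq 1) s.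
Definition nemset (s : seq nat) : bool := posmset s && (s != [::]).
Definition mmin (s : seq nat) : nat := head 0%N s.
Definition mmax (s : seq nat) : nat := last 0%N s.

Definition covers (d : Order.disp_t) (P : finPOrderType d) (s t : P) : bool :=
  (s < t) && ~~ [exists u : P, (s < u) && (u < t)].

Definition PTpartition (d : Order.disp_t) (P : finPOrderType d)
    (theta : P -> nat) (sigma : {ffun P -> seq nat}) : Prop :=
  (forall p, nemset (sigma p)) /\
  (forall s t : P, covers s t ->
     (theta s < theta t)%N -> (mmax (sigma s) <= mmin (sigma t))%N) /\
  (forall s t : P, covers s t ->
     (theta s > theta t)%N -> (mmax (sigma s) < mmin (sigma t))%N).

(* Monomials x^m = prod_{r>=1} x_r^(m r); the value m 0 is irrelevant. *)
(* Set of (P,theta)-partitions sigma with x^sigma = x^m :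
   its cardinality is the coefficient of x^m in \hat K_{P,theta}. *)
Definition Kcoeffset (d : Order.disp_t) (P : finPOrderType d)
    (theta : P -> nat) (m : nat -> nat) (sigma : {ffun P -> seq nat}) : Prop :=
  PTpartition theta sigma /\
  (forall r, (0 < r)%N -> (\sum_(p : P) count_mem r (sigma p))%N = m r).

(* Word w = w_1 ... w_N is the list [:: w_1; ...; w_N]; w_i = nth 0 w (i-1). *)
Definition descents (w : seq nat) : seq nat :=
  [seq i <- iota 1 (size w).-1 | (nth 0 w i.-1 > nth 0 w i)%N].

(* C(w) = (s_1, s_2 - s_1, ..., N - s_k) *)
Definition compC (w : seq nat) : seq nat :=
  pairmap (fun a b => b - a)%N 0%N (rcons (descents w) (size w)).

Definition setS (alpha : seq nat) : seq nat :=
  [seq sumn (take i alpha) | i <- iota 1 (size alpha).-1].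

(* Sequences (sigma_1,...,sigma_M), M = |alpha|, of nonempty finite multisets
   of positive integers with max sigma_j <= min sigma_{j+1}, strict for
   j in S_alpha, and with x^sigma = x^m.  (sigma_j = nth [::] tau (j-1).)
   Its cardinality is the coefficient of x^m in \hat L_alpha. *)
Definition Lcoeffset (alpha : seq nat) (m : nat -> nat) (tau : seq (seq nat))
  : Prop :=
  size tau = sumn alpha /\
  (forall s, s \in tau -> nemset s) /\
  (forall j, (1 <= j)%N -> (j < sumn alpha)%N ->
     (mmax (nth [::] tau j.-1) <= mmin (nth [::] tau j))%N) /\
  (forall j, (1 <= j)%N -> (j < sumn alpha)%N -> j \in setS alpha ->
     (mmax (nth [::] tau j.-1) < mmin (nth [::] tau j))%N) /\
  (forall r, (0 < r)%N -> sumn [seq count_mem r s | s <- tau] = m r).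

(* e : P -> subsets of [N]; the element i : 'I_N stands for the integer i+1. *)
Definition linmultiext (d : Order.disp_t) (P : finPOrderType d) (N : nat)
    (e : {ffun P -> {set 'I_N}}) : Prop :=
  (forall x, e x != set0) /\
  (forall x y : P, x < y ->
     forall i j : 'I_N, i \in e x -> j \in e y -> (i < j)%N) /\
  (forall i : 'I_N, exists! x : P, i \in e x) /\
  (forall (x : P) (i j : 'I_N), val j = (val i).+1 ->
     ~~ ((i \in e x) && (j \in e x))).

Definition inJ (d : Order.disp_t) (P : finPOrderType d) (theta : P -> nat)
    (N : nat) (w : seq nat) : Prop :=
  size w = N /\
  exists e : {ffun P -> {set 'I_N}}, linmultiext e /\
    (forall (i : 'I_N) (x : P), i \in e x -> nth 0 w i = theta x).

(* Triples (N, w, tau) with N >= n, w \in \tilde J_N(P,theta) and tau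
   contributing x^m to \hat L_{C(w)}: its cardinality is the coefficient of
   x^m in  sum_{N>=n} sum_{w in \tilde J_N} \hat L_{C(w)}. *)
Definition Rcoeffset (d : Order.disp_t) (P : finPOrderType d)
    (theta : P -> nat) (m : nat -> nat)
    (t : nat * seq nat * seq (seq nat)) : Prop :=
  let: (N, w, tau) := t in
  (#|P| <= N)%N /\ inJ theta N w /\ Lcoeffset (compC w) m tau.

(* Main.v *)
Require Import Defs.
From mathcomp Require Import all_boot all_order zify.
From Stdlib Require Import ClassicalEpsilon.
Set Implicit Arguments. Unset Strict Implicit. Unset Printing Implicit Defensive.
Import Order.Theory.
Lemma card_eq_of_list (T : eqType) (A : T -> Prop) (s : seq T) :
  (forall x, A x -> x \in s) -> exists c, card_eq A c.
Proof.
move=> HA.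
pose dec := fun x => if excluded_middle_informative (A x) then true else false.
have decP x : dec x = true <-> A x.
  by rewrite /dec; case: excluded_middle_informative => //= H; split.
case: s HA => [|x0 s0] HA.
  exists 0.
  have f : 'I_0 -> T by case.
  exists f; split; first by case.
  move=> x; split; first by move/HA.
  by case=> -[].
pose s' := undup [seq x <- x0 :: s0 | dec x].
exists (size s'), (fun i => nth x0 s' i); split.
  move=> i j /eqP; rewrite nth_uniq ?undup_uniq ?ltn_ord //.
  by move/eqP/val_inj.
move=> x; split.
  move=> Ax; have xs' : x \in s'.
    by rewrite mem_undup mem_filter (proj2 (decP x) Ax) HA.
  have xi : index x s' < size s' by rewrite index_mem.
  by exists (Ordinal xi) => /=; rewrite nth_index.
case=> i <-.
have : nth x0 s' i \in s' by rewrite mem_nth.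
by rewrite mem_undup mem_filter => /andP[/decP].
Qed.

Lemma card_eq_transfer (T U : eqType) (A : T -> Prop) (B : U -> Prop)
  (F : U -> T) c : card_eq A c -> (forall u, B u -> A (F u)) ->
  (forall u v, B u -> B v -> F u = F v -> u = v) ->
  (forall x, A x -> exists u, B u /\ F u = x) -> card_eq B c.
Proof.
move=> [f [finj fA]] HBA Hinj Hsurj.
have H i : exists u, B u /\ F u = f i.
  by apply: Hsurj; apply/fA; exists i.
pose g i := proj1_sig (constructive_indefinite_description _ (H i)).
have gP i : B (g i) /\ F (g i) = f i.
  exact: (proj2_sig (constructive_indefinite_description _ (H i))).
exists g; split.
  move=> i j gij; apply: finj.
  by rewrite -(proj2 (gP i)) -(proj2 (gP j)) gij.
move=> u; split.
  move=> Bu; have [i fi] : exists i, f i = F u by apply/fA; apply: HBA.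
  exists i; apply: Hinj; [exact: (proj1 (gP i))|exact: Bu|].
  by rewrite (proj2 (gP i)).
by case=> i <-; exact: (proj1 (gP i)).
Qed.
Lemma path_leq_last y s : path leq y s -> y <= last y s.
Proof.
move=> H; have := order_path_min leq_trans H => /allP Ha.
have := mem_last y s; rewrite inE => /orP[/eqP->//|]; exact: Ha.
Qed.

Lemma sumn_pairmap x0 s : path leq x0 s ->
  sumn (pairmap (fun a b => b - a) x0 s) = last x0 s - x0.
Proof.
elim: s x0 => [|y s IH] x0 /=; first by rewrite subnn.
move=> /andP[h1 h2]; rewrite IH //; have := path_leq_last h2; lia.
Qed.

Lemma setS_cons a alpha : alpha != [::] ->
  setS (a :: alpha) = a :: map (addn a) (setS alpha).
Proof.
case: alpha => [//|b alpha] _; rewrite /setS /=.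
rewrite addn0; congr (_ :: _).
rewrite -map_comp (_ : 2 = 1 + 1) // iotaDl -map_comp; apply: eq_map => i /=.
by [].
Qed.

Lemma setS_pairmap x0 d N : path leq x0 (rcons d N) ->
  setS (pairmap (fun a b => b - a) x0 (rcons d N)) = map (subn^~ x0) d.
Proof.
elim: d x0 => [|y d IH] x0 //=.
move=> /andP[h1 h2]; rewrite setS_cons; last by case: (d).
rewrite IH // -map_comp; congr (_ :: _); apply/eq_in_map => z zd /=.
have := order_path_min leq_trans h2 => /allP/(_ z).
rewrite mem_rcons inE zd orbT => /(_ isT).
move=> hz; by rewrite addnC addnBA // subnK.
Qed.

Lemma descents_path w : path leq 0 (rcons (descents w) (size w)).
Proof.
rewrite rcons_path; apply/andP; split.
  have : sorted leq (descents w).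
    by apply: sorted_filter; [exact: leq_trans | exact: iota_sorted].
  by case: (descents w).
have := mem_last 0 (descents w); rewrite inE => /orP[/eqP->//|].
by rewrite mem_filter mem_iota => /andP[_ /andP[_ h]]; rewrite -ltnS; apply: leq_trans h _; case: (size w) => // n; rewrite add1n ltnS leqW.
Qed.

Lemma sumn_compC w : sumn (compC w) = size w.
Proof.
rewrite /compC sumn_pairmap ?descents_path //.
by rewrite last_rcons subn0.
Qed.

Lemma setS_compC w : setS (compC w) = descents w.
Proof.
rewrite /compC setS_pairmap ?descents_path //.
by rewrite -[RHS]map_id; apply: eq_map => z; rewrite subn0.
Qed.

Lemma mem_descents w j : (j \in descents w) = [&& 1 <= j, j < size w & nth 0 w j.-1 > nth 0 w j].
Proof.
rewrite mem_filter mem_iota; case: j => [|j] /=; first by rewrite andbF.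
apply/idP/idP => /andP[]; lia.
Qed.
Definition lexle (a b : nat * nat) : bool :=
  (a.1 < b.1) || ((a.1 == b.1) && (a.2 <= b.2)).

Lemma lexle_trans : transitive lexle.
Proof. move=> [a1 a2] [b1 b2] [c1 c2]; rewrite /lexle /=; lia. Qed.
Lemma lexle_total : total lexle.
Proof. move=> [a1 a2] [b1 b2]; rewrite /lexle /=; lia. Qed.
Lemma lexle_anti : antisymmetric lexle.
Proof. move=> [a1 a2] [b1 b2]; rewrite /lexle /= => H; apply/eqP; rewrite xpair_eqE; lia. Qed.

Definition Lb (bs : seq (nat * seq nat)) : seq (nat * nat) :=
  flatten [seq [seq (v, x.1) | v <- x.2] | x <- bs].

Lemma Lb_cons x bs : Lb (x :: bs) = [seq (v, x.1) | v <- x.2] ++ Lb bs.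
Proof. by []. Qed.

Lemma filter_Lb l bs :
  [seq y <- Lb bs | y.2 == l] = Lb [seq x <- bs | x.1 == l].
Proof.
elim: bs => [//|x bs IH]; rewrite Lb_cons filter_cat IH /=.
have [e|ne] := eqVneq x.1 l; rewrite ?Lb_cons.
  rewrite (@eq_in_filter _ _ predT) ?filter_predT //.
by move=> y /mapP[v _ ->]; rewrite /= e eqxx.
rewrite (@eq_in_filter _ (fun y : nat*nat => y.2 == l) pred0) ?filter_pred0 //.
by move=> y /mapP[v _ ->]; rewrite /=; exact/negbTE.
Qed.

Lemma map_fst_Lb bs : map fst (Lb bs) = flatten (map snd bs).
Proof.
by elim: bs => [//|x bs IH]; rewrite Lb_cons map_cat IH -map_comp map_id.
Qed.

Lemma mem_Lb (y : nat * nat) (bs : seq (nat * seq nat)) : y \in Lb bs -> exists2 x, x \in bs & x.1 = y.2 /\ y.1 \in x.2.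
Proof.
case/flattenP=> s /mapP[x xbs ->] /mapP[v vx ->]; by exists x.
Qed.

Lemma Lb_mem (x : nat * seq nat) (bs : seq (nat * seq nat)) (v : nat) : x \in bs -> v \in x.2 -> (v, x.1) \in Lb bs.
Proof.
move=> xb vx; apply/flattenP; exists [seq (v, x.1) | v <- x.2].
  by apply/mapP; exists x.
by apply/mapP; exists v.
Qed.

Lemma sorted_cat_all (T : eqType) (r : rel T) (s1 s2 : seq T) u v :
  transitive r -> sorted r (s1 ++ s2) -> u \in s1 -> v \in s2 -> r u v.
Proof.
move=> tr + us1; case/splitPr: us1 => p1 p2.
rewrite -catA cat_cons sorted_cat_cons => /andP[_ /(order_path_min tr)/allP H] vs2.
by apply: H; rewrite mem_cat vs2 orbT.
Qed.

Lemma sorted_flatten_lt (T : eqType) (r : rel T) (bs : seq (seq T)) i j u v :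
  transitive r -> sorted r (flatten bs) -> i < j -> j < size bs ->
  u \in nth [::] bs i -> v \in nth [::] bs j -> r u v.
Proof.
move=> tr so ij js ui vj; move: so.
rewrite -{1}(cat_take_drop j bs) flatten_cat => so.
apply: (sorted_cat_all tr so).
  apply/flattenP; exists (nth [::] bs i) => //.
  rewrite -(nth_take [::] ij) mem_nth // size_take js //.
by rewrite (drop_nth [::] js) /= mem_cat vj.
Qed.

Lemma mem_last_ne (T : eqType) (x0 : T) s : s != [::] -> last x0 s \in s.
Proof. by case: s => // a s _; exact: (mem_last a s). Qed.
Lemma mem_head_ne (T : eqType) (x0 : T) s : s != [::] -> head x0 s \in s.
Proof. by case: s => // a s _; exact: mem_head. Qed.

Lemma sorted_flatten_of (T : eqType) (r : rel T) (x0 : T) (bs : seq (seq T)) :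
  all (fun b => b != [::]) bs -> all (sorted r) bs ->
  (forall j, j.+1 < size bs ->
     r (last x0 (nth [::] bs j)) (head x0 (nth [::] bs j.+1))) ->
  sorted r (flatten bs).
Proof.
elim: bs => [//|b bs IH] /= /andP[bne bsne] /andP[sb sbs] H.
have Hs : sorted r (flatten bs) by apply: IH => // j js; apply: (H j.+1).
case: b bne sb H => [//|a b'] _ /= sb H.
rewrite cat_path sb /=.
case: bs bsne IH Hs H sbs => [//|c bs''] /= /andP[cne _] _ Hs H _.
case: c cne Hs H => [//|c0 c'] _ Hs H /=.
move: Hs; rewrite cat_cons /= => ->; rewrite andbT; exact: (H 0 isT).
Qed.

Definition nohead (l : nat) (c : seq (nat * nat)) : bool :=
  if c is y :: _ then y.2 != l else true.

Lemma split_block (l : nat) (a a' : seq nat) (c c' : seq (nat * nat)) :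
  nohead l c -> nohead l c' ->
  [seq (v, l) | v <- a] ++ c = [seq (v, l) | v <- a'] ++ c' -> a = a' /\ c = c'.
Proof.
elim: a a' => [|x a IH] [|x' a'] //= hc hc'.
- by move=> E; move: hc; rewrite E /= eqxx.
- by move=> E; move: hc'; rewrite -E /= eqxx.
- case=> -> E; have [-> ->] := IH a' hc hc' E; by [].
Qed.

Definition bgood (bs : seq (nat * seq nat)) : bool :=
  all (fun x => x.2 != [::]) bs && sorted (fun x y => x.1 != y.1) bs.

Lemma nohead_Lb x bs : bgood (x :: bs) ->
  nohead x.1 (Lb bs).
Proof.
case: bs => [//|y bs] /andP[/= /and3P[_ yne _] /andP[ne _]].
by case: y yne ne => l' [|v b] //= _ ne; rewrite eq_sym.
Qed.

Lemma bgood_tail x bs : bgood (x :: bs) -> bgood bs.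
Proof. by rewrite /bgood => /andP[/= /andP[_ ->] /path_sorted]. Qed.

Lemma Lb_inj bs bs' : bgood bs -> bgood bs' -> Lb bs = Lb bs' -> bs = bs'.
Proof.
elim: bs bs' => [|x bs IH] [|x' bs'] //.
- by move=> _ /andP[/andP[ne _] _]; case: x' ne => l [|v b].
- by move=> /andP[/andP[ne _] _]; case: x ne => l [|v b].
move=> g g'; rewrite !Lb_cons.
case: x g => l b g; case: x' g' => l' b' g' /=.
case: b g => [|v b] g; first by case/andP: g => /andP[].
case: b' g' => [|v' b'] g'; first by case/andP: g' => /andP[].
case=> ev el E; subst v' l'.
have [eb ec] := split_block (nohead_Lb g) (nohead_Lb g') E.
by rewrite eb (IH bs' (bgood_tail g) (bgood_tail g') ec).
Qed.

Lemma blocks_exist (s : seq (nat * nat)) : exists bs, bgood bs /\ Lb bs = s.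
Proof.
elim: s => [|[v l] s [bs [g E]]]; first by exists [::].
case: bs g E => [|[l' b] rest] g E.
  by exists [:: (l, [:: v])]; rewrite -E.
have [el|ne] := eqVneq l l'.
  subst l'; exists ((l, v :: b) :: rest); split; last by rewrite -E.
  move: g; rewrite /bgood /= => /andP[/andP[_ ->] p] /=.
  by case: (rest) p.
exists ((l, [:: v]) :: (l', b) :: rest); split; last by rewrite -E.
by move: g; rewrite /bgood /= ne => /andP[-> ->].
Qed.
Lemma sorted_le_last a s : sorted leq s -> a \in s -> a <= last 0 s.
Proof.
elim: s => [//|h s IH] /= ps; rewrite inE => /orP[/eqP->|aS].
  exact: path_leq_last.
have ne : s != [::] by case: (s) aS.
rewrite (_ : last h s = last 0 s); first exact: IH (path_sorted ps) aS.
by case: (s) ne.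
Qed.

Lemma sorted_head_le a s : sorted leq s -> a \in s -> head 0 s <= a.
Proof.
case: s => [//|h s] /= ps; rewrite inE => /orP[/eqP->//|aS].
by have := order_path_min leq_trans ps => /allP/(_ a aS).
Qed.

Section Main.
Variables (d : Order.disp_t) (P : finPOrderType d) (theta : P -> nat).
Hypothesis theta_inj : injective theta.

Lemma linmultiext_card N (e : {ffun P -> {set 'I_N}}) :
  linmultiext e -> #|P| <= N.
Proof.
case=> ne [_ [uq _]].
have H x : exists i, i \in e x.
  by have /set0Pn[i ?] := ne x; exists i.
pose f x := proj1_sig (constructive_indefinite_description _ (H x)).
have fP x : f x \in e x := proj2_sig (constructive_indefinite_description _ (H x)).
have finj : injective f.
  move=> x y fxy; have [z [_ zu]] := uq (f x).
  by rewrite -(zu x (fP x)) (zu y) // fxy fP.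
by have := leq_card f finj; rewrite card_ord.
Qed.

Definition Qrel (sigma : {ffun P -> seq nat}) (x y : P) : Prop :=
  forall a b, a \in sigma x -> b \in sigma y -> lexle (a, theta x) (b, theta y).

Lemma PT_lt sigma : PTpartition theta sigma ->
  forall x y : P, (x < y)%O -> Qrel sigma x y.
Proof.
case=> ne [c1 c2].
have sortedS p : sorted leq (sigma p) by case/andP: (ne p) => /andP[].
suff H n : forall x y : P, #|[set u | (x < u)%O && (u < y)%O]| <= n ->
    (x < y)%O -> Qrel sigma x y.
  by move=> x y; apply: H (leqnn _).
elim: n => [|n IH] x y.
  rewrite leqn0 => /eqP/cards0_eq E xy a b ax bY.
  have cxy : covers x y.
    rewrite /covers.
    apply/andP; split; first exact: xy.
    apply/existsPn => u; apply/negP => H.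
    have : u \in [set u | (x < u)%O && (u < y)%O] by rewrite inE.
    by rewrite E inE.
  have ha := sorted_le_last (sortedS x) ax.
  have hb := sorted_head_le (sortedS y) bY.
  have [lt|gt|eq] := ltngtP (theta x) (theta y).
  - have := c1 x y cxy lt; rewrite /lexle /= /mmax /mmin; lia.
  - have := c2 x y cxy gt; rewrite /lexle /= /mmax /mmin; lia.
  - by move: xy; rewrite (theta_inj eq) ltxx.
move=> Hc xy.
case: (set_0Vmem [set u | (x < u)%O && (u < y)%O]) => [E|[u]].
  by apply: IH => //; rewrite E cards0.
rewrite inE => /andP[xu uy].
have sub1 : [set v | (x < v)%O && (v < u)%O] \proper [set u | (x < u)%O && (u < y)%O].
  apply/properP; split.
    apply/subsetP => v; rewrite !inE => /andP[-> vu] /=; exact: lt_trans vu uy.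
  by exists u; rewrite !inE ?xu ?uy // ltxx andbF.
have sub2 : [set v | (u < v)%O && (v < y)%O] \proper [set u | (x < u)%O && (u < y)%O].
  apply/properP; split.
    apply/subsetP => v; rewrite !inE => /andP[uv ->]; rewrite andbT; exact: lt_trans xu uv.
  by exists u; rewrite !inE ?xu ?uy // ltxx.
have Q1 := IH x u (leq_trans (proper_card sub1) Hc) xu.
have Q2 := IH u y (leq_trans (proper_card sub2) Hc) uy.
move=> a b ax bY.
have /andP[_ une] := ne u.
have cu : head 0 (sigma u) \in sigma u by exact: mem_head_ne.
exact: lexle_trans (Q1 _ _ ax cu) (Q2 _ _ cu bY).
Qed.


Definition blocksL (bs : seq (nat * seq nat)) : seq (seq (nat * nat)) :=
  [seq [seq (v, x.1) | v <- x.2] | x <- bs].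

Lemma nth_blocksL bs j : j < size bs ->
  nth [::] (blocksL bs) j = [seq (v, (nth (0,[::]) bs j).1) | v <- (nth (0,[::]) bs j).2].
Proof. by move=> js; rewrite /blocksL (nth_map (0,[::])). Qed.

Lemma last_map_ne (f : nat -> nat * nat) s x0 : s != [::] ->
  last x0 (map f s) = f (last 0 s).
Proof. by case: s => // a s _ /=; rewrite last_map. Qed.

Lemma head_map_ne (f : nat -> nat * nat) s x0 : s != [::] ->
  head x0 (map f s) = f (head 0 s).
Proof. by case: s. Qed.

Lemma mem_zip2 (w : seq nat) (tau : seq (seq nat)) x :
  size w = size tau -> x \in zip w tau -> x.2 \in tau.
Proof.
move=> sz xz; have := map_f snd xz.
by rewrite -/(unzip2 _) unzip2_zip // sz.
Qed.

Section R.
Variables (m : nat -> nat) (N : nat) (w : seq nat) (tau : seq (seq nat)).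
Hypothesis HR : Rcoeffset theta m (N, w, tau).

Lemma R_size : size w = N /\ size tau = N.
Proof.
case: HR => _ [[sw _] [st _]]; split => //.
by rewrite st sumn_compC.
Qed.

Lemma R_lab i : i < N -> exists x, nth 0 w i = theta x.
Proof.
move=> hi; case: HR => _ [[_ [e [[_ [_ [uq _]]] wl]]] _].
have [x [ix _]] := uq (Ordinal hi); exists x; exact: (wl _ _ ix).
Qed.

Lemma R_adj i : i.+1 < N -> nth 0 w i != nth 0 w i.+1.
Proof.
move=> hi1; case: HR => _ [[_ [e [[_ [_ [uq adj]]] wl]]] _].
have hi := ltnW hi1.
have [x [ix _]] := uq (Ordinal hi); have [x' [ix' _]] := uq (Ordinal hi1).
apply/negP => /eqP E.
have h1 := wl _ _ ix; have h2 := wl _ _ ix'.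
move: h1 h2; rewrite /= E => h1 h2.
have exx : x = x' by apply: theta_inj; rewrite -h1 -h2.
subst x'.
by have := adj x (Ordinal hi) (Ordinal hi1) erefl; rewrite ix ix'.
Qed.

Lemma R_ord x y i j : (x < y)%O -> i < N -> j < N ->
  nth 0 w i = theta x -> nth 0 w j = theta y -> i < j.
Proof.
move=> xy hi hj wi wj; case: HR => _ [[_ [e [[_ [ord [uq _]]] wl]]] _].
have [x' [ix _]] := uq (Ordinal hi); have [y' [jy _]] := uq (Ordinal hj).
have := wl _ _ ix; rewrite /= wi => /theta_inj ex; subst x'.
have := wl _ _ jy; rewrite /= wj => /theta_inj ey; subst y'.
exact: (ord x y xy (Ordinal hi) (Ordinal hj) ix jy).
Qed.

Lemma R_ne s : s \in tau -> nemset s.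
Proof. by case: HR => _ [_ [_ [tne _]]]; apply: tne. Qed.

Lemma R_bgood : bgood (zip w tau).
Proof.
have [sw st] := R_size.
apply/andP; split.
  apply/allP => x xz; have := R_ne (mem_zip2 (etrans sw (esym st)) xz).
  by case/andP.
apply/(sortedP (0, [::])) => i; rewrite size_zip sw st minnn => hi.
by rewrite !nth_zip ?sw ?st //=; apply: R_adj.
Qed.

Lemma R_sorted : sorted lexle (Lb (zip w tau)).
Proof.
have [sw st] := R_size.
have szt : size w = size tau by rewrite sw st.
case: HR => _ [_ [_ [tne [ch1 [ch2 _]]]]].
rewrite sumn_compC sw in ch1 ch2.
rewrite setS_compC in ch2.
apply: (@sorted_flatten_of _ lexle (0,0) (blocksL (zip w tau))).
- apply/allP => b /mapP[x xz ->]; have := R_ne (mem_zip2 szt xz).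
  by case/andP => _; rewrite -!size_eq0 size_map.
- apply/allP => b /mapP[x xz ->]; have := R_ne (mem_zip2 szt xz).
  case/andP => /andP[sx _] _; rewrite sorted_map; apply: sub_sorted sx.
  by move=> u v /= uv; rewrite /lexle /= leqnn andbT orbC -leq_eqVlt.
- move=> j; rewrite size_map size_zip sw st minnn => hj.
  have hj0 : j < N by apply: ltnW.
  have szz : size (zip w tau) = N by rewrite size_zip sw st minnn.
  rewrite !nth_blocksL ?szz // !nth_zip //=.
  have hj0' : j < size tau by rewrite st.
  have hj' : j.+1 < size tau by rewrite st.
  have ne1 : nth [::] tau j != [::].
    by have /andP[_] := R_ne (mem_nth [::] hj0').
  have ne2 : nth [::] tau j.+1 != [::].
    by have /andP[_] := R_ne (mem_nth [::] hj').
  rewrite last_map_ne // head_map_ne //.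
  have := ch1 j.+1 isT hj; rewrite /= -/(mmax _) -/(mmin _) => le1.
  have [lt|gt|eq] := ltngtP (nth 0 w j) (nth 0 w j.+1).
  + by rewrite /lexle /=; move: le1 lt; rewrite /mmax /mmin; lia.
  + have := ch2 j.+1 isT hj; rewrite mem_descents /= sw hj gt => /(_ isT).
    by rewrite /lexle /= => ->.
  + by rewrite /lexle /= eq leqnn andbT orbC -leq_eqVlt.
Qed.

Lemma R_count r : 0 < r -> sumn [seq count_mem r s | s <- tau] = m r.
Proof. by case: HR => _ [_ [_ [_ [_ [_ c]]]]]; apply: c. Qed.

Lemma R_nonempty x : exists2 i, i < N & nth 0 w i = theta x.
Proof.
case: HR => _ [[_ [e [[ne _] wl]]] _].
have /set0Pn[i ix] := ne x; exists (val i); [exact: ltn_ord | exact: wl _ _ ix].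
Qed.

End R.

Lemma sorted_fst (s : seq (nat * nat)) l : sorted lexle s ->
  all (fun y => y.2 == l) s -> sorted leq (map fst s).
Proof.
move=> so al; rewrite sorted_map.
apply: (sub_in_sorted (P := fun y : nat * nat => y.2 == l)) al so.
move=> [a1 a2] [b1 b2]; rewrite /lexle !unfold_in /= => /eqP -> /eqP ->.
by rewrite leqnn andbT orbC -leq_eqVlt.
Qed.

Lemma SUMP (L : seq (nat * nat)) (a : pred (nat * nat)) :
  (forall y, y \in L -> exists p, y.2 = theta p) ->
  \sum_(p : P) count (fun y => a y && (y.2 == theta p)) L = count a L.
Proof.
elim: L => [|y L IH] H /=; first by rewrite big1.
rewrite big_split /= IH; last by move=> z zL; apply: H; rewrite inE zL orbT.
congr (_ + _).
have [q yq] := H y (mem_head _ _).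
rewrite (bigD1 q) //= yq eqxx andbT big1 ?addn0 // => p pq.
by rewrite (inj_eq theta_inj) eq_sym (negbTE pq) andbF.
Qed.

Definition Ft (t : nat * seq nat * seq (seq nat)) : {ffun P -> seq nat} :=
  [ffun p => flatten [seq x.2 | x <- zip t.1.2 t.2 & x.1 == theta p]].

Lemma Ft_Lb N w tau p :
  Ft (N, w, tau) p = map fst [seq y <- Lb (zip w tau) | y.2 == theta p].
Proof. by rewrite ffunE filter_Lb map_fst_Lb. Qed.

Section R2.
Variables (m : nat -> nat) (N : nat) (w : seq nat) (tau : seq (seq nat)).
Hypothesis HR : Rcoeffset theta m (N, w, tau).

Lemma L_block y : y \in Lb (zip w tau) ->
  exists2 i, i < N & nth 0 w i = y.2 /\ y \in nth [::] (blocksL (zip w tau)) i.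
Proof.
have [sw st] := R_size HR.
have szz : size (zip w tau) = N by rewrite size_zip sw st minnn.
case/mem_Lb => X Xz [X1 yX].
exists (index X (zip w tau)); first by rewrite -szz index_mem.
have hi : index X (zip w tau) < size (zip w tau) by rewrite index_mem.
rewrite nth_blocksL // nth_index //.
have := nth_index (0, [::]) Xz; rewrite nth_zip ?sw ?st // => EX.
have E1 : X.1 = nth 0 w (index X (zip w tau)) by rewrite -{1}EX.
split; first by rewrite -X1 E1.
by case: y X1 yX => v l /= <- vX; apply: (map_f (fun v => (v, X.1)) vX).
Qed.

Lemma L_lab y : y \in Lb (zip w tau) -> exists p, y.2 = theta p.
Proof.
case/L_block => i hi [wi _]; have [p wp] := R_lab HR hi.
by exists p; rewrite -wi.
Qed.

Lemma L_pos y : y \in Lb (zip w tau) -> 0 < y.1.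
Proof.
have [sw st] := R_size HR.
case/mem_Lb => X Xz [_ yX].
have := R_ne HR (mem_zip2 (etrans sw (esym st)) Xz).
by case/andP => /andP[_ /allP /(_ _ yX)].
Qed.

Lemma inFt_block a x : a \in Ft (N, w, tau) x ->
  exists2 i, i < N & nth 0 w i = theta x /\
     (a, theta x) \in nth [::] (blocksL (zip w tau)) i.
Proof.
rewrite Ft_Lb => /mapP[y]; rewrite mem_filter => /andP[/eqP yl yL] ->.
have [i hi [wi yi]] := L_block yL.
by exists i => //; rewrite -yl; split => //; case: y yl yL wi yi.
Qed.

Lemma KEY1 a b x y : (x < y)%O -> a \in Ft (N, w, tau) x -> b \in Ft (N, w, tau) y ->
  lexle (a, theta x) (b, theta y).
Proof.
move=> xy ax bY.
have [i hi [wi ai]] := inFt_block ax.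
have [j hj [wj bj]] := inFt_block bY.
have ij := R_ord HR xy hi hj wi wj.
have [sw st] := R_size HR.
apply: (sorted_flatten_lt lexle_trans (R_sorted HR) ij _ ai bj).
by rewrite size_map size_zip sw st minnn.
Qed.

Lemma Ft_ne x : Ft (N, w, tau) x != [::].
Proof.
have [sw st] := R_size HR.
have [i hi wi] := R_nonempty HR x.
have hi' : i < size (zip w tau) by rewrite size_zip sw st minnn.
have Xz := mem_nth (0, [::]) hi'.
have ne : (nth (0, [::]) (zip w tau) i).2 != [::].
  by have /andP[_] := R_ne HR (mem_zip2 (etrans sw (esym st)) Xz).
have := Lb_mem Xz (mem_head_ne 0 ne); rewrite nth_zip ?sw ?st //= wi => H.
apply/negP => /eqP E; move: E; rewrite Ft_Lb.
move/(f_equal (fun s => (head 0 (nth [::] tau i)) \in s)).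
rewrite in_nil => /negbT/negP; apply; apply/mapP.
by exists (head 0 (nth [::] tau i), theta x) => //; rewrite mem_filter eqxx.
Qed.

Lemma Ft_K : Kcoeffset theta m (Ft (N, w, tau)).
Proof.
have [sw st] := R_size HR.
have nes p : nemset (Ft (N, w, tau) p).
  rewrite /nemset Ft_ne andbT /posmset; apply/andP; split.
    rewrite Ft_Lb; apply: (sorted_fst (l := theta p)).
      exact: (sorted_filter lexle_trans _ (R_sorted HR)).
    exact: filter_all.
  rewrite Ft_Lb; apply/allP => v /mapP[y]; rewrite mem_filter => /andP[_ yL] ->.
  exact: L_pos yL.
split; [split; [exact: nes | split] | ].
- move=> s t cst lt.
  have st' : (s < t)%O by case/andP: cst.
  have := KEY1 st' (mem_last_ne 0 (Ft_ne s)) (mem_head_ne 0 (Ft_ne t)).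
  rewrite /lexle /mmax /mmin /=; move: lt; lia.
- move=> s t cst gt.
  have st' : (s < t)%O by case/andP: cst.
  have := KEY1 st' (mem_last_ne 0 (Ft_ne s)) (mem_head_ne 0 (Ft_ne t)).
  rewrite /lexle /mmax /mmin /=; move: gt; lia.
- move=> r r0.
  under eq_bigr => p _ do rewrite Ft_Lb count_map count_filter.
  rewrite (SUMP (fun y => y.1 == r)); last by move=> y; apply: L_lab.
  rewrite -(R_count HR r0) -count_flatten.
  have -> : flatten tau = map fst (Lb (zip w tau)).
    by rewrite map_fst_Lb -/(unzip2 _) unzip2_zip // sw st.
  by rewrite count_map.
Qed.

End R2.

Lemma Ft_inj m t t' : Rcoeffset theta m t -> Rcoeffset theta m t' -> Ft t = Ft t' -> t = t'.
Proof.
case: t => [[N w] tau]; case: t' => [[N' w'] tau'] HR HR' E.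
have EL : Lb (zip w tau) = Lb (zip w' tau').
  apply: (sorted_eq lexle_trans lexle_anti (R_sorted HR) (R_sorted HR')).
  rewrite /perm_eq; apply/allP => -[v l] _; apply/eqP.
  have C (L0 : seq (nat * nat)) :
      count_mem (v, l) L0 = count_mem v (map fst [seq y <- L0 | y.2 == l]).
    by rewrite count_map count_filter; apply: eq_count => -[a b] /=; rewrite xpair_eqE.
  rewrite !C.
  case: (pickP (fun p => theta p == l)) => [p /eqP <-| none].
    by rewrite -(Ft_Lb N) -(Ft_Lb N') E.
  have Z (L0 : seq (nat * nat)) : (forall y, y \in L0 -> exists p, y.2 = theta p) ->
      [seq y <- L0 | y.2 == l] = [::].
    move=> lab; rewrite (@eq_in_filter _ _ pred0) ?filter_pred0 //.
    move=> y /lab [p ->] /=; exact: none.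
  by rewrite (Z _ (L_lab HR)) (Z _ (L_lab HR')).
have [sw st] := R_size HR; have [sw' st'] := R_size HR'.
have Ez := Lb_inj (R_bgood HR) (R_bgood HR') EL.
have ew : w = w'.
  by have := f_equal unzip1 Ez; rewrite !unzip1_zip ?sw ?st ?sw' ?st'.
have et : tau = tau'.
  by have := f_equal unzip2 Ez; rewrite !unzip2_zip ?sw ?st ?sw' ?st'.
by subst w' tau'; rewrite -sw -sw'.
Qed.


Lemma flatten_nils (T U : Type) (s : seq T) : flatten [seq ([::] : seq U) | _ <- s] = [::].
Proof. by elim: s. Qed.

Lemma flatten_pick (T : eqType) (U : Type) (s : seq T) p (g : seq U) :
  uniq s -> p \in s -> flatten [seq (if q == p then g else [::]) | q <- s] = g.
Proof.
elim: s => [//|q s IH] /= /andP[qs us]; rewrite inE.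
have [eqp|ne] := eqVneq q p => /= H.
  subst q; rewrite ?eqxx /= (@eq_in_map _ _ _ (fun _ => [::]) s).1 ?flatten_nils ?cats0 //.
  by move=> q0 q0s; case: eqP => // e; subst q0; rewrite q0s in qs.
rewrite ?(negbTE ne) /=; apply: IH => //; move: H; rewrite eq_sym (negbTE ne).
Qed.

Lemma sorted_flatten_part (T : eqType) (r : rel T) (bs : seq (seq T)) b :
  sorted r (flatten bs) -> b \in bs -> sorted r b.
Proof.
elim: bs => [//|c bs IH] /= /cat_sorted2 [sc sb]; rewrite inE.
by case/orP => [/eqP->|]; [exact: sc | exact: IH].
Qed.

Definition entries (sigma : {ffun P -> seq nat}) : seq (nat * nat) :=
  flatten [seq [seq (v, theta p) | v <- sigma p] | p <- enum P].

Lemma mem_entries sigma y :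
  y \in entries sigma <-> exists p, y.2 = theta p /\ y.1 \in sigma p.
Proof.
split.
  by case/flattenP => s /mapP[p _ ->] /mapP[v vp ->]; exists p.
case: y => v l [p [/= -> vp]]; apply/flattenP.
exists [seq (v, theta p) | v <- sigma p]; first by apply: map_f; rewrite mem_enum.
exact: (map_f (fun v => (v, theta p)) vp).
Qed.

Lemma filter_entries sigma p :
  [seq y <- entries sigma | y.2 == theta p] = [seq (v, theta p) | v <- sigma p].
Proof.
rewrite /entries filter_flatten -map_comp.
rewrite (@eq_map _ _ _ (fun q => if q == p then [seq (v, theta p) | v <- sigma p] else [::])).
  by rewrite flatten_pick ?enum_uniq ?mem_enum.
move=> q /=; have [->|ne] := eqVneq q p.
  rewrite (@eq_in_filter _ _ predT) ?filter_predT //.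
  by move=> y /mapP[v _ ->]; rewrite /= eqxx.
rewrite (@eq_in_filter _ (fun y : nat * nat => y.2 == theta p) pred0) ?filter_pred0 //.
move=> y /mapP[v _ ->]; rewrite /= (inj_eq theta_inj); exact/negbTE.
Qed.

Lemma count_entries sigma r :
  count (fun y : nat * nat => y.1 == r) (entries sigma) = \sum_p count_mem r (sigma p).
Proof.
rewrite /entries count_flatten -map_comp sumnE big_map big_enum /=.
by apply: eq_bigr => p _; rewrite count_map.
Qed.

Lemma Ft_surj m sigma : Kcoeffset theta m sigma ->
  exists t, Rcoeffset theta m t /\ Ft t = sigma.
Proof.
case=> [[ne [c1 c2]] cnt].
have sortedS p : sorted leq (sigma p) by case/andP: (ne p) => /andP[].
set s := sort lexle (entries sigma).
have [bs [g Ebs]] := blocks_exist s.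
set w := map fst bs; set tau := map snd bs; set N := size bs.
have zE : zip w tau = bs := zip_unzip bs.
have sw : size w = N by rewrite size_map.
have st : size tau = N by rewrite size_map.
have so : sorted lexle (Lb bs) by rewrite Ebs sort_sorted //; exact: lexle_total.
have memL y : (y \in Lb bs) = (y \in entries sigma) by rewrite Ebs mem_sort.
have nthw i : nth 0 w i = (nth (0, [::]) bs i).1.
  case: (ltnP i N) => hi; first by rewrite (nth_map (0, [::])).
  by rewrite !nth_default ?sw.
have ntht i : nth [::] tau i = (nth (0, [::]) bs i).2.
  case: (ltnP i N) => hi; first by rewrite (nth_map (0, [::])).
  by rewrite !nth_default ?st.
have bne i : i < N -> (nth (0, [::]) bs i).2 != [::].
  by move=> hi; case/andP: g => /allP /(_ _ (mem_nth _ hi)).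
have blk i v : i < N -> v \in (nth (0, [::]) bs i).2 ->
    exists q, (nth (0, [::]) bs i).1 = theta q /\ v \in sigma q.
  move=> hi vi; have := Lb_mem (mem_nth (0, [::]) hi) vi.
  by rewrite memL => /mem_entries.
have inblk i y : i < N -> y.2 = (nth (0, [::]) bs i).1 -> y.1 \in (nth (0, [::]) bs i).2 ->
    y \in nth [::] (blocksL bs) i.
  move=> hi e1 e2; rewrite nth_blocksL //; case: y e1 e2 => v l /= -> vi.
  exact: (map_f (fun v => (v, (nth (0, [::]) bs i).1)) vi).
pose e := [ffun x => [set i : 'I_N | nth 0 w i == theta x]].
have inE' (i : 'I_N) x : (i \in e x) = (nth 0 w i == theta x).
  by rewrite ffunE inE.
have LE : linmultiext e.
  split; [|split; [|split]].
  - move=> x; apply/set0Pn.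
    have /andP[_ nx] := ne x.
    have : (head 0 (sigma x), theta x) \in Lb bs.
      by rewrite memL; apply/mem_entries; exists x; split => //; exact: mem_head_ne.
    case/mem_Lb => X Xb [X1 _].
    have hi : index X bs < N by rewrite index_mem.
    exists (Ordinal hi); rewrite inE' /= nthw nth_index //; exact/eqP.
  - move=> x y xy i j; rewrite !inE' !nthw => /eqP ix /eqP jy.
    have [a ai] : exists a, a \in (nth (0, [::]) bs i).2.
      by exists (head 0 (nth (0, [::]) bs i).2); apply: mem_head_ne; apply: bne.
    have [b bj] : exists b, b \in (nth (0, [::]) bs j).2.
      by exists (head 0 (nth (0, [::]) bs j).2); apply: mem_head_ne; apply: bne.
    have [q [q1 aq]] := blk i a (ltn_ord i) ai.
    have [q' [q1' bq]] := blk j b (ltn_ord j) bj.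
    move: q1 q1'; rewrite ix jy => /theta_inj eq1 /theta_inj eq2; subst q q'.
    have Q := PT_lt (conj ne (conj c1 c2)) xy aq bq.
    have [//|ji|eij] := ltngtP i j.
      have := sorted_flatten_lt lexle_trans so ji (_ : i < size (blocksL bs))
        (inblk j (b, theta y) (ltn_ord j) (esym jy) bj)
        (inblk i (a, theta x) (ltn_ord i) (esym ix) ai).
      rewrite size_map ltn_ord => /(_ isT) Q'.
      have [_] := lexle_anti (introT andP (conj Q Q')).
      by move/theta_inj => exy; move: xy; rewrite exy ltxx.
    move: ix jy; rewrite (val_inj eij) => -> /theta_inj exy.
    by move: xy; rewrite exy ltxx.
  - move=> i; have hi := ltn_ord i.
    have [q [q1 _]] := blk i _ hi (mem_head_ne 0 (bne i hi)).
    exists q; split; first by rewrite inE' nthw q1.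
    by move=> q'; rewrite inE' nthw q1 => /eqP /theta_inj.
  - move=> x i j eji; rewrite !inE'; apply/negP => /andP[/eqP h1 /eqP h2].
    have hj := ltn_ord j.
    case/andP: g => _ /(sortedP (0, [::])) /(_ i); rewrite -eji => /(_ hj).
    by rewrite -!nthw h1 h2 eqxx.
exists (N, w, tau); split.
  split; first exact: linmultiext_card LE.
  split.
    by split => //; exists e; split => // i x; rewrite inE' => /eqP.
  split; first by rewrite sumn_compC sw st.
  split.
    move=> b /mapP[X Xb ->]; apply/andP; split; last by case/andP: g => /allP/(_ _ Xb).
    apply/andP; split.
      have -> : X.2 = map fst [seq (v, X.1) | v <- X.2] by elim: (X.2) => //= ? ? <-.
      apply: (sorted_fst (l := X.1)); last by apply/allP => y /mapP[v _ ->] /=.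
      apply: (sorted_flatten_part so); exact: (map_f (fun x => [seq (v, x.1) | v <- x.2]) Xb).
    apply/allP => v vX.
    have := Lb_mem Xb vX; rewrite memL => /mem_entries [q [_ vq]].
    by case/andP: (ne q) => /andP[_ /allP /(_ _ vq)].
  rewrite sumn_compC sw setS_compC.
  have key j : 0 < j -> j < N ->
      lexle (mmax (nth [::] tau j.-1), nth 0 w j.-1) (mmin (nth [::] tau j), nth 0 w j).
    case: j => [//|j] _ hj /=; have hj0 : j < N by apply: ltnW.
    rewrite !ntht !nthw.
    apply: (sorted_flatten_lt lexle_trans so (ltnSn j) (_ : j.+1 < size (blocksL bs))).
    + by rewrite size_map.
    + by apply: inblk => //; apply: mem_last_ne; apply: bne.
    + by apply: inblk => //; apply: mem_head_ne; apply: bne.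
  split.
    move=> j j0 hj; have := key j j0 hj; rewrite /lexle /=; lia.
  split.
    move=> j j0 hj; rewrite mem_descents sw j0 hj /= => dj.
    have := key j j0 hj; rewrite /lexle /=; move: dj; lia.
  move=> r r0; rewrite -cnt // -count_entries.
  rewrite -(permP (permEl (perm_sort lexle (entries sigma)))) -/s -Ebs.
  by rewrite -count_flatten /tau -map_fst_Lb count_map.
apply/ffunP => p; rewrite Ft_Lb zE Ebs (filter_sort lexle_total lexle_trans).
rewrite filter_entries (sorted_sort lexle_trans).
  by elim: (sigma p) => //= a l ->.
rewrite sorted_map; apply: sub_sorted (sortedS p).
by move=> u v /= uv; rewrite /lexle /= leqnn andbT orbC -leq_eqVlt.
Qed.

End Main.
Fixpoint allseqs (n : nat) (V : seq nat) : seq (seq nat) :=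
  if n is n'.+1 then [::] :: [seq v :: s | v <- V, s <- allseqs n' V]
  else [:: [::]].

Lemma mem_allseqs n V s : size s <= n -> all (mem V) s -> s \in allseqs n V.
Proof.
elim: n s => [|n IH] [|x s] //= hs /andP[xV sV].
rewrite inE /=; apply/allpairsPdep; exists x, s; split => //.
exact: IH.
Qed.

Lemma sum_ind (V : seq nat) x : \sum_(v <- V) ((x == v) : nat) = count_mem x V.
Proof. by elim: V => [|v V IH]; rewrite ?big_nil ?big_cons //= IH eq_sym. Qed.

Lemma size_count (V s : seq nat) : uniq V -> all (mem V) s ->
  size s = \sum_(v <- V) count_mem v s.
Proof.
move=> uV; elim: s => [|x s IH] /=; first by rewrite big1.
move=> /andP[xV sV]; rewrite big_split /= -IH // sum_ind count_uniq_mem //.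
by rewrite xV.
Qed.

Lemma K_finite (d : Order.disp_t) (P : finPOrderType d) (theta : P -> nat) m k :
  (forall r, k < r -> m r = 0) -> exists c, card_eq (Kcoeffset theta m) c.
Proof.
move=> hk.
pose V := iota 0 k.+1.
pose D := \sum_(v <- V) m v.
pose L0 := allseqs D V.
pose FF := map (fun g : {ffun P -> 'I_(size L0)} => [ffun p => nth [::] L0 (g p)]) (enum {ffun P -> 'I_(size L0)}).
apply: (card_eq_of_list (s := FF)) => sigma [[ne _] cnt].
have inL0 p : sigma p \in L0.
  have bnd v : 0 < v -> count_mem v (sigma p) <= m v.
    move=> v0; rewrite -(cnt v v0) (bigD1 p) //=; exact: leq_addr.
  have sV : all (mem V) (sigma p).
    apply/allP => v vs; rewrite /= /V mem_iota /= add0n ltnS.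
    case/andP: (ne p) => /andP[_ /allP /(_ _ vs) v0] _.
    rewrite leqNgt; apply/negP => kv.
    have := bnd v v0; rewrite hk // leqn0 => /eqP/count_memPn.
    by rewrite vs.
  apply: (mem_allseqs _ sV).
  rewrite (size_count (iota_uniq 0 k.+1) sV); apply: leq_sum => v _.
  case: v => [|v]; last exact: bnd.
  case/andP: (ne p) => /andP[_ pos] _.
  rewrite (_ : count_mem 0 (sigma p) = 0) //; apply/count_memPn.
  by apply/negP => /(allP pos).
have hi p : index (sigma p) L0 < size L0 by rewrite index_mem.
pose g := [ffun p => Ordinal (hi p)].
have -> : sigma = [ffun p => nth [::] L0 (g p)].
  by apply/ffunP => p; rewrite !ffunE /= nth_index.
by apply: (map_f (fun g : {ffun P -> 'I_(size L0)} => [ffun p => nth [::] L0 (g p)])); rewrite mem_enum.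
Qed.

Theorem mainTheorem4 (d : Order.disp_t) (P : finPOrderType d)
    (theta : P -> nat)
    (theta_inj : injective theta)
    (theta_range : forall p : P, (1 <= theta p <= #|P|)%N) :
  forall m : nat -> nat, (exists k, forall r, (k < r)%N -> m r = 0%N) ->
  exists c : nat, card_eq (Kcoeffset theta m) c /\ card_eq (Rcoeffset theta m) c.
Proof.
move=> m [k hk].
have [c Kc] := K_finite theta hk.
exists c; split => //.
apply: (card_eq_transfer (F := Ft theta) Kc).
- move=> [[N w] tau] HR. exact: (Ft_K theta_inj HR).
- by move=> t t' h1 h2 h3; exact: (Ft_inj theta_inj h1 h2 h3).
- by move=> sigma h; exact: (Ft_surj theta_inj h).
Qed.
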